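(* Let $(A,B)$ be a Katsura pair, with associated action $\phi_{A,B}:\mathbb{Z}\times E_A^0\to\operatorname{PIso}(E_A^* )$. Then $a_i^k\in\ker(\phi_{A,B})$ if and only if $\frac{kB_\mu}{A_\mu}\in\mathbb{Z}$ for all $\mu\in iE_A^*$.
   Context: Katsura pair: $N\in\mathbb{N}$, $A\in M_N(\mathbb{N})$ (nonnegative integers), $B\in M_N(\mathbb{Z})$ with $A_{ij}=0\Rightarrow B_{ij}=0$. Graph $E_A$: vertices $\{1,\dots,N\}$, edges $e_{i,j,m}$ ($0\le m<A_{ij}$), $r(e_{i,j,m})=i$, $s(e_{i,j,m})=j$. Finite paths $\mu_1\cdots\mu_n$ with $s(\mu_t)=r(\mu_{t+1})$ (vertices are paths of length 0); $iE_A^*$ are the finite paths with range $i$. For $\mu=e_{i_0,i_1,r_1}\cdots e_{i_{n-1},i_n,r_n}$, $A_\mu=\prod_{t=0}^{n-1}A_{i_ti_{t+1}}$ and $B_\mu=\prod_{t=0}^{n-1}B_{i_ti_{t+1}}$ (empty product $=1$). The group bundle $\mathbb{Z}\times E_A^0$ has elements $a_i^k$ ($k\in\mathbb{Z}$, $i$ a vertex) with $a_i^ka_i^l=a_i^{k+l}$. It acts by $a_i^k\cdot e_{i,j,m}=e_{i,j,\hat m}$, $a_i^k|_{e_{i,j,m}}=a_j^{\hat k}$ where $kB_{ij}+m=\hat kA_{ij}+\hat m$, $0\le\hat m<A_{ij}$, extended to paths by $g\cdot(e\nu)=(g\cdot e)(g|_e\cdot\nu)$; $\phi_{A,B}(a_i^k)$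 is the resulting bijection of $iE_A^*$. $\ker(\phi_{A,B})$ is the set of $a_i^k$ acting as the identity on $iE_A^*$. *)

(* Defs.v *)
From HB Require Import structures.
From mathcomp Require Import all_boot all_order all_algebra.
Set Implicit Arguments. Unset Strict Implicit. Unset Printing Implicit Defensive.
Import Order.TTheory GRing.Theory Num.Theory.
Local Open Scope ring_scope.

Definition katsura_pair (N : nat) (A : 'M[nat]_N) (B : 'M[int]_N) : Prop :=
  forall i j : 'I_N, A i j = 0%N -> B i j = 0.

(* An edge e_{i,j,m} is encoded as the triple (i, j, m), with range i,
   source j, and it is an edge of E_A iff m < A i j. *)
Definition edge (N : nat) : Type := ('I_N * 'I_N * nat)%type.

(* [is_path_from A i p]: the sequence of edges p = mu_1 ... mu_n is a finite
   path of E_A with range i (p = [::] is the vertex i, a path of length 0). *)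
Fixpoint is_path_from (N : nat) (A : 'M[nat]_N) (i : 'I_N) (p : seq (edge N))
  : bool :=
  match p with
  | [::] => true
  | (r, s, m) :: q => [&& r == i, (m < A r s)%N & is_path_from A s q]
  end.

Definition A_path (N : nat) (A : 'M[nat]_N) (p : seq (edge N)) : int :=
  \prod_(e <- p) (A e.1.1 e.1.2)%:Z.
Definition B_path (N : nat) (B : 'M[int]_N) (p : seq (edge N)) : int :=
  \prod_(e <- p) B e.1.1 e.1.2.

(* Action of a_r^k on a path with range r: on the first edge e_{r,s,m},
   k B_rs + m = khat A_rs + mhat with 0 <= mhat < A_rs (Euclidean division,
   A_rs > 0 since the edge exists); the restriction a_s^khat acts on the rest. *)
Fixpoint katsura_act (N : nat) (A : 'M[nat]_N) (B : 'M[int]_N) (k : int)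
  (p : seq (edge N)) : seq (edge N) :=
  match p with
  | [::] => [::]
  | (r, s, m) :: q =>
      let t := k * B r s + m%:Z in
      (r, s, `|(t %% (A r s)%:Z)%Z|%N) :: katsura_act A B (t %/ (A r s)%:Z)%Z q
  end.

Definition in_ker_phi (N : nat) (A : 'M[nat]_N) (B : 'M[int]_N)
  (i : 'I_N) (k : int) : Prop :=
  forall p : seq (edge N), is_path_from A i p -> katsura_act A B k p = p.

(* Main.v *)
Require Import Defs.
From HB Require Import structures.
From mathcomp Require Import all_boot all_order all_algebra.
From mathcomp Require Import zify ring.
Import Order.TTheory GRing.Theory Num.Theory.
Local Open Scope ring_scope.

Lemma s1 (a m : nat) (x : int) : (0 < a)%N -> (m < a)%N ->
  (`|((x + m%:Z) %% a%:Z)%Z|%N == m) = (a%:Z %| x)%Z.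
Proof. move=> ha hm.
have a0 : a%:Z != 0 by rewrite lt0n_neq0.
have ge : (0 <= (x + m%:Z) %% a%:Z)%Z by rewrite modz_ge0.
have ey : ((x + m%:Z) %% a%:Z)%Z = (`|((x + m%:Z) %% a%:Z)%Z|%N)%:Z by rewrite gez0_abs.
have ms : (m%:Z %% a%:Z)%Z = m%:Z by rewrite modz_small // ltz_nat hm.
apply/eqP/idP.
- move=> h; have : ((x + m%:Z) = m%:Z %[mod a%:Z])%Z by rewrite ey h ms.
  by move/eqP; rewrite eqz_mod_dvd addrK.
- move=> /dvdzP [q eq]; apply/eqP; rewrite -eqz_nat -ey eq modzMDl ms //.
Qed.
Lemma s2 (a m : nat) (x : int) : (0 < a)%N -> (m < a)%N -> (a%:Z %| x)%Z ->
  ((x + m%:Z) %/ a%:Z)%Z = (x %/ a%:Z)%Z.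
Proof. move=> ha hm /dvdzP [q ->].
have a0 : a%:Z != 0 by rewrite lt0n_neq0.
rewrite divzMDl // mulzK // divz_small ?addr0 // lez_nat ltz_nat hm /=; rewrite gez0_abs.
Qed.

Lemma ratZ (a x : int) : a != 0 ->
  (exists z : int, ((x%:~R / a%:~R) : rat) = z%:~R) <-> (a %| x)%Z.
Proof.
move=> a0; have a0' : (a%:~R : rat) != 0 by rewrite intr_eq0.
split.
- move=> [z hz]; apply/dvdzP; exists z.
  apply/(@intr_inj rat); rewrite intrM -hz mulfVK //.
- move=> h; exists (x %/ a)%Z.
  by rewrite -{1}(divzK h) intrM mulfK.
Qed.

Lemma A_path_gt0 N (A : 'M[nat]_N) p : forall i, is_path_from A i p -> 0 < A_path A p.
Proof.
elim: p => [|[[r s] m] q IH] i /=; first by rewrite /A_path big_nil.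
case/and3P=> _ hm hq; rewrite /A_path big_cons /= mulr_gt0 //; last exact: (IH s).
rewrite ltz_nat; exact: leq_ltn_trans hm.
Qed.

Lemma fwd N (A : 'M[nat]_N) (B : 'M[int]_N) p : forall i k,
  in_ker_phi A B i k -> is_path_from A i p -> (A_path A p %| k * B_path B p)%Z.
Proof.
elim: p => [|[[r s] m] q IH] i k hk /=.
  by rewrite /A_path /B_path !big_nil dvd1z.
case/and3P=> /eqP ri hm hq; subst r.
have ha : (0 < A i s)%N by exact: leq_ltn_trans hm.
have := hk _ (_ : is_path_from A i ((i, s, m) :: q)).
rewrite /= eqxx hm hq => /(_ isT) [] /eqP.
rewrite s1 // => hdvd _.
set k' := ((k * B i s + m%:Z) %/ (A i s)%:Z)%Z.
have ek' : k' = ((k * B i s) %/ (A i s)%:Z)%Z by rewrite /k' s2.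
have kb : k * B i s = k' * (A i s)%:Z by rewrite ek' divzK.
have hk' : in_ker_phi A B s k'.
  move=> q' hq'; have := hk ((i, s, m) :: q').
  by rewrite /= eqxx hm hq' => /(_ isT) [].
move/dvdzP: (IH s k' hk' hq) => [c hc].
apply/dvdzP; exists c.
rewrite /A_path /B_path !big_cons /= -/(A_path A q) -/(B_path B q).
rewrite mulrA kb; transitivity ((k' * B_path B q) * (A i s)%:Z); first by ring.

by rewrite hc; ring.
Qed.

Lemma bwd N (A : 'M[nat]_N) (B : 'M[int]_N) p : forall i k,
  (forall p', is_path_from A i p' -> (A_path A p' %| k * B_path B p')%Z) ->
  is_path_from A i p -> katsura_act A B k p = p.
Proof.
elim: p => [|[[r s] m] q IH] i k hk //=.
case/and3P=> /eqP ri hm hq; subst r.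
have ha : (0 < A i s)%N by exact: leq_ltn_trans hm.
have hdvd : ((A i s)%:Z %| k * B i s)%Z.
  have := hk [:: (i, s, 0%N)]; rewrite /= eqxx ha /A_path /B_path !big_seq1 /=.
  by apply.
have -> : `|((k * B i s + m%:Z) %% (A i s)%:Z)%Z|%N = m by apply/eqP; rewrite s1.
rewrite s2 //; congr (_ :: _); apply: (IH s); last exact: hq; move=> q' hq'.
have := hk ((i, s, m) :: q'); rewrite /= eqxx hm hq' => /(_ isT).
rewrite /A_path /B_path !big_cons /= -/(A_path A q') -/(B_path B q').
have kb : k * B i s = ((k * B i s) %/ (A i s)%:Z)%Z * (A i s)%:Z by rewrite divzK.
rewrite mulrA kb (_ : _ * (A i s)%:Z * _ = (A i s)%:Z * (((k * B i s) %/ (A i s)%:Z)%Z * B_path B q')); last by ring.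
have a0 : (A i s)%:Z != 0 by rewrite gt_eqF // ltz_nat.
by rewrite dvdz_mul2l // mulzK.
Qed.

Theorem proposition3p1 (N : nat) (A : 'M[nat]_N) (B : 'M[int]_N)
  (hAB : katsura_pair A B) (i : 'I_N) (k : int) :
  in_ker_phi A B i k <->
  (forall p : seq (edge N), is_path_from A i p ->
     exists z : int,
       ((k * B_path B p)%:~R / (A_path A p)%:~R : rat) = z%:~R).
Proof.
split.
- move=> hk p hp; apply/ratZ; first by rewrite gt_eqF // (@A_path_gt0 _ A p i hp).
  exact: fwd hk hp.
- move=> h p hp; apply: bwd hp => p' hp'.
  by apply/ratZ; [rewrite gt_eqF // (@A_path_gt0 _ A p' i hp') | exact: h].
Qed.
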